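(* Let $P=P(G,[\omega])$ be a toric poset over $G=(V,E)$ and $I\subseteq V$. The following are equivalent: (i) $I$ is a toric filter of $P$; (ii) $I$ is an order ideal of $P(G,\omega')$ for some $\omega'\in[\omega]$; (iii) $I$ is an order filter of $P(G,\omega'')$ for some $\omega''\in[\omega]$; (iv) in at least one total toric extension of $P$, the elements of $I$ appear in consecutive cyclic order.
   Context: Toric poset setup: $V=[n]$; $\mathrm{Acyc}(G)$ acyclic orientations; $P(G,\omega)$ the poset given by the transitive closure of $\omega$; $[\omega]$ the class under the equivalence generated by converting a source into a sink; toric chambers (components of $\mathbb{R}^V/\mathbb{Z}^V$ minus the hyperplanes $\{x_i\equiv x_j\bmod1\}$, $\{i,j\}\in E$) correspond bijectively to classes $[\omega]$; $P(G,[\omega])$ is identified with its chamber $c(P)$. For a partition $\pi$, $D^{\mathrm{tor}}_\pi$ is the image in the torus of $\{x\in\mathbb{R}^V: x_i=x_j$ for $i,j$ in a common block$\}$. Toric filter: $I\subseteq V$ is a toric filter of $P$ if $I=\emptyset$, $I=V$, or $\emptyset\ne I\ne V$ and $\overline{c(P)}\cap D^{\mathrm{tor}}_{\{I,V\setminus I\}}$ is two-dimensional (equivalently, the partition $\{I,V\setminus I\}$ is closed w.r.t. $P$, i.e. it is the coarsest partition giving that intersection; this is the preimage structure of a toric morphism onto a two-element toric poset). An order ideal of a poset is a down-closed subset; an order filter an up-closed subset. A total toric extension of $P$ is a chamber $c(P')\subseteq c(P)$ of the toric arrangement of the complete graph $K_V$; these are indexed by cyclic classes $[(w_1,\dots,w_n)]$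 of permutations of $V$ (the set where $0\le x_{w_1}<\dots<x_{w_n}<1$ up to cyclic shift). *)

(* Defs.v *)
From Stdlib Require Import Reals Relations.
From mathcomp Require Import all_boot.
Set Implicit Arguments. Unset Strict Implicit. Unset Printing Implicit Defensive.
Local Open Scope R_scope.

(* A simple graph G = (V, E) with V = 'I_n (= [n]), E given by a symmetric
   irreflexive relation e ({i,j} in E <-> e i j). *)
Definition simple_graph n (e : rel 'I_n) : Prop := irreflexive e /\ symmetric e.

Definition orientation n (e o : rel 'I_n) : Prop :=
  (forall i j, o i j -> e i j) /\ (forall i j, e i j -> o i j (+) o j i).

Definition acyclic_orientation n (e o : rel 'I_n) : Prop :=
  orientation e o /\ (forall i j, o i j -> ~~ connect o j i).

(* P(G, o): the poset with i <= j iff connect o i j (reflexive-transitive closure). *)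
Definition order_ideal n (o : rel 'I_n) (I : {set 'I_n}) : Prop :=
  forall i j, connect o i j -> j \in I -> i \in I.
Definition order_filter n (o : rel 'I_n) (I : {set 'I_n}) : Prop :=
  forall i j, connect o i j -> i \in I -> j \in I.

Definition is_source n (e o : rel 'I_n) (i : 'I_n) : Prop := forall j, e i j -> o i j.
Definition flip n (o : rel 'I_n) (i : 'I_n) : rel 'I_n :=
  fun x y => if (x == i) || (y == i) then o y x else o x y.
Definition flip_step n (e : rel 'I_n) (o o' : rel 'I_n) : Prop :=
  (exists i, is_source e o i /\ o' =2 flip o i) \/ o =2 o'.
(* toric_equiv e o o' : o' is in the class [o] (equivalence generated by flips). *)
Definition toric_equiv n (e : rel 'I_n) : relation (rel 'I_n) :=
  clos_refl_sym_trans (rel 'I_n) (flip_step e).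

(* Geometry: points of R^V (the torus R^V/Z^V is handled via Z^V-periodic sets). *)
Definition frac (t : R) : R := (t - IZR (Int_part t)).
Definition is_int (t : R) : Prop := exists z : Z, t = IZR z.

Definition orient_of n (e : rel 'I_n) (x : 'I_n -> R) : rel 'I_n :=
  fun i j => e i j && (if Rlt_dec (frac (x i)) (frac (x j)) then true else false).

(* (Preimage in R^V of) the toric chamber c(P(G,[o])). *)
Definition in_chamber n (e o : rel 'I_n) (x : 'I_n -> R) : Prop :=
  (forall i j, e i j -> ~ is_int (x i - x j)) /\ toric_equiv e (orient_of e x) o.

Definition closure n (S : ('I_n -> R) -> Prop) (x : 'I_n -> R) : Prop :=
  forall eps, (0 < eps) -> exists y, S y /\ forall v, (Rabs (x v - y v) < eps).

(* Toric filter: closure(c(P)) /\ D^tor_{I, V\I} is two-dimensional, i.e. has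
   nonempty interior in the 2-dimensional torus D^tor_{I,V\I}. *)
Definition toric_filter n (e o : rel 'I_n) (I : {set 'I_n}) : Prop :=
  I = set0 \/ I = setT \/
  [/\ I != set0, I != setT &
      exists (k : 'I_n -> Z) (a b eps : R), (0 < eps) /\
        forall a' b' : R, (Rabs (a' - a) < eps) -> (Rabs (b' - b) < eps) ->
          closure (in_chamber e o)
            (fun v => ((if v \in I then a' else b') + IZR (k v)))].

(* Total toric extensions: chambers of the toric arrangement of K_V, indexed by
   cyclic classes of permutations w of V. *)
Definition is_perm_seq n (w : seq 'I_n) : Prop := perm_eq w (enum 'I_n).
Definition increasing_along n (x : 'I_n -> R) (s : seq 'I_n) : Prop :=
  forall a b, a \in s -> b \in s -> (index a s < index b s)%N ->
    (frac (x a) < frac (x b)).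
Definition total_chamber n (w : seq 'I_n) (x : 'I_n -> R) : Prop :=
  exists k, increasing_along x (rot k w).
Definition total_toric_ext n (e o : rel 'I_n) (w : seq 'I_n) : Prop :=
  is_perm_seq w /\ (forall x, total_chamber w x -> in_chamber e o x).
Definition cyc_consecutive n (I : {set 'I_n}) (w : seq 'I_n) : Prop :=
  exists k, [set v in take #|I| (rot k w)] = I.

(* Main.v *)
Require Import Defs.
From Stdlib Require Import Reals Relations Lra Lia.
From mathcomp Require Import all_boot.
Set Implicit Arguments. Unset Strict Implicit. Unset Printing Implicit Defensive.

Local Open Scope R_scope.

Lemma IP_uniq (z : Z) (s : R) : IZR z <= s -> s < IZR z + 1 -> Int_part s = z.
Proof.
move=> h1 h2; have [b1 b2] := base_Int_part s.
have h3 : (z < Int_part s + 1)%Z.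
  apply: lt_IZR; rewrite plus_IZR; lra.
have h4 : (Int_part s < z + 1)%Z.
  apply: lt_IZR; rewrite plus_IZR; lra.
lia.
Qed.

Lemma frac_bounds t : 0 <= frac t < 1.
Proof. have [b1 b2] := base_Int_part t; rewrite /frac; lra. Qed.

Lemma frac_eq (z : Z) (s : R) : IZR z <= s -> s < IZR z + 1 -> frac s = s - IZR z.
Proof. by move=> h1 h2; rewrite /frac (IP_uniq h1 h2). Qed.

Lemma frac_id s : 0 <= s -> s < 1 -> frac s = s.
Proof. move=> h1 h2; rewrite (@frac_eq 0%Z) //=; lra. Qed.

Lemma frac_shift t h : 0 <= frac t + h < 1 -> frac (t + h) = frac t + h.
Proof.
move=> [h1 h2]; rewrite (@frac_eq (Int_part t)); rewrite /frac in h1 h2 *; lra.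
Qed.

Lemma frac_periodic t (z : Z) : frac (t + IZR z) = frac t.
Proof.
have [b1 b2] := frac_bounds t.
rewrite (@frac_eq (Int_part t + z)); rewrite ?(plus_IZR (Int_part t) z); rewrite /frac in b1 b2 *; lra.
Qed.

Lemma frac_near t s c g : frac t = c -> Rabs (t - s) < g -> g <= c -> g <= 1 - c ->
  Rabs (frac s - c) < g.
Proof.
move=> hc /Rabs_def2 [h1 h2] g1 g2.
rewrite (@frac_eq (Int_part t)); rewrite /frac in hc; try lra.
apply: Rabs_def1; lra.
Qed.

Lemma int_frac x y : is_int (x - y) -> frac x = frac y.
Proof.
move=> [z hz]; have -> : x = y + IZR z by lra.
exact: frac_periodic.
Qed.
Local Close Scope R_scope.

Definition ow n (e : rel 'I_n) (s : seq 'I_n) : rel 'I_n :=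
  fun i j => e i j && (index i s < index j s).
Definition good n (e o : rel 'I_n) : Prop :=
  orientation e o /\ exists r : 'I_n -> nat, forall a b, o a b -> r a < r b.

Lemma teq_eq n (e o o' : rel 'I_n) : o =2 o' -> toric_equiv e o o'.
Proof. by move=> h; apply: rst_step; right. Qed.

Lemma teq_sym n (e o o' : rel 'I_n) : toric_equiv e o o' -> toric_equiv e o' o.
Proof. exact: rst_sym. Qed.

Lemma teq_trans n (e a b c : rel 'I_n) :
  toric_equiv e a b -> toric_equiv e b c -> toric_equiv e a c.
Proof. exact: rst_trans. Qed.

Lemma good_eq n (e o o' : rel 'I_n) : o =2 o' -> good e o -> good e o'.
Proof.
move=> h [[h1 h2] [r hr]]; split; first split.
- by move=> i j; rewrite -h; apply: h1.
- by move=> i j /h2; rewrite !h.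
by exists r => a b; rewrite -h; apply: hr.
Qed.

Lemma good_flip n (e o : rel 'I_n) i : simple_graph e -> is_source e o i ->
  good e o -> good e (flip o i).
Proof.
move=> [irr sym] src [[h1 h2] [r hr]]; split; first split.
- move=> a b; rewrite /flip; case: ifP => _; last exact: h1.
  by move/h1; rewrite sym.
- move=> a b eab; rewrite /flip orbC; case: ifP => _; last exact: h2.
  by rewrite addbC h2 // sym.
exists (fun v => if v == i then (\max_u r u).+1 else r v) => a b.
rewrite /flip; case: (eqVneq a i) => [->|ai] /=.
- move=> obi; have eib : e i b by rewrite sym; apply: h1.
  by have := h2 _ _ eib; rewrite obi (src _ eib).
case: (eqVneq b i) => [->|bi] /=.
- by move=> _; rewrite ltnS leq_bigmax.
exact: hr.
Qed.

Lemma good_flip_sink n (e o : rel 'I_n) i : simple_graph e ->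
  (forall j, ~~ o i j) -> good e o -> good e (flip o i).
Proof.
move=> [irr sym] snk [[h1 h2] [r hr]]; split; first split.
- move=> a b; rewrite /flip; case: ifP => _; last exact: h1.
  by move/h1; rewrite sym.
- move=> a b eab; rewrite /flip orbC; case: ifP => _; last exact: h2.
  by rewrite addbC h2 // sym.
exists (fun v => if v == i then 0 else (r v).+1) => a b.
rewrite /flip; case: (eqVneq a i) => [->|ai] /=.
- case: (eqVneq b i) => [->|//]; by move: (snk i) => /negPf ->.
case: (eqVneq b i) => [->|bi] /=.
- by move=> h; move: (snk a); rewrite h.
by move/hr.
Qed.

Lemma flipK n (o : rel 'I_n) i : flip (flip o i) i =2 o.
Proof. by move=> a b; rewrite /flip; case: (a == i); case: (b == i). Qed.

Lemma flip_eq n (o o' : rel 'I_n) i : o =2 o' -> flip o i =2 flip o' i.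
Proof. by move=> h a b; rewrite /flip !h. Qed.

Lemma good_step n (e x y : rel 'I_n) : simple_graph e -> flip_step e x y ->
  (good e x <-> good e y).
Proof.
move=> sg [[i [src hy]]|hxy].
- split.
  + move=> gx; apply: (good_eq (o := flip x i)); first by move=> a b; rewrite hy.
    exact: good_flip.
  + move=> gy; have gfy : good e (flip y i).
      apply: good_flip_sink => // j; have [[h1 h2] _] := gy.
      case: (boolP (e i j)) => eij; last first.
        by apply/negP => /h1; rewrite (negPf eij).
      have := h2 _ _ eij; rewrite (hy j i) /flip eqxx orbT (src _ eij).
      by case: (y i j).
    apply: (good_eq _ gfy) => a b; rewrite (flip_eq i hy a b).
    by rewrite flipK.
- by split; apply: good_eq.
Qed.

Lemma good_teq n (e x y : rel 'I_n) : simple_graph e -> toric_equiv e x y ->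
  (good e x <-> good e y).
Proof.
move=> sg; elim => [a b /(good_step sg)|a|a b _ IH|a b c _ IH1 _ IH2] //; tauto.
Qed.

Lemma good_acyc n (e o : rel 'I_n) : acyclic_orientation e o -> good e o.
Proof.
move=> [ori acyc]; split => //.
exists (fun v => #|[set u | connect o u v]|) => a b oab.
apply: proper_card; apply/properP; split.
- apply/subsetP => u; rewrite !inE => h; exact: connect_trans h (connect1 oab).
- exists b; rewrite !inE ?connect0 //; exact: acyc.
Qed.

Lemma perm_all n (s : seq 'I_n) : perm_eq s (enum 'I_n) -> forall x, x \in s.
Proof. by move=> h x; rewrite (perm_mem h) mem_enum. Qed.

Lemma perm_uniq' n (s : seq 'I_n) : perm_eq s (enum 'I_n) -> uniq s.
Proof. by move=> h; rewrite (perm_uniq h) enum_uniq. Qed.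

Lemma ow_rot1 n (e : rel 'I_n) t : simple_graph e -> perm_eq t (enum 'I_n) ->
  toric_equiv e (ow e t) (ow e (rot 1 t)).
Proof.
move=> [irr sym] pt; case: t pt => [|v t'] pt; first exact: rst_refl.
have U : v \notin t' by have := perm_uniq' pt => /andP [].
have M : forall x, x != v -> x \in t'.
  by move=> x xv; have := perm_all pt x; rewrite inE (negPf xv).
rewrite rot1_cons; apply: rst_step; left; exists v; split.
- move=> j evj; rewrite /ow evj /= eqxx; case: (eqVneq v j) => [vj|//].
  by move: evj; rewrite -vj irr.
move=> a b; rewrite /ow /flip -!cats1 !index_cat /=.
case: (eqVneq a v) => [->|av]; case: (eqVneq b v) => [->|bv] /=.
- by rewrite irr.
- rewrite (negPf U) (M _ bv) sym addn0; case: (e b v) => //=.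
  by rewrite ltnNge ltnW // index_mem M.
- by rewrite (negPf U) (M _ av) sym addn0 index_mem M.
- by rewrite (M _ av) (M _ bv).
Qed.

Lemma ow_rot n (e : rel 'I_n) w k : simple_graph e -> perm_eq w (enum 'I_n) ->
  toric_equiv e (ow e w) (ow e (rot k w)).
Proof.
move=> sg pw; elim: k => [|k IH]; first by rewrite rot0; exact: rst_refl.
case: (leqP k.+1 (size w)) => hk; last first.
  rewrite rot_oversize; [exact: rst_refl| exact: ltnW].
rewrite -add1n rotD //; apply: teq_trans IH _; apply: ow_rot1 => //.
by rewrite perm_rot.
Qed.

Lemma index_neq (T : eqType) (s : seq T) i j : i \in s -> i != j ->
  index i s != index j s.
Proof.
move=> hi ij; apply/eqP => h; move/negP: ij; apply.
by rewrite -(nth_index i hi) h nth_index // -index_mem -h index_mem.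
Qed.

Lemma chamber_incr n (e : rel 'I_n) s (x : 'I_n -> R) : simple_graph e ->
  perm_eq s (enum 'I_n) -> increasing_along x s ->
  (forall i j, e i j -> ~ is_int (x i - x j)) /\ orient_of e x =2 ow e s.
Proof.
move=> [irr sym] ps inc.
have key : forall i j, i != j ->
  (Rlt (frac (x i)) (frac (x j)) /\ index i s < index j s) \/
  (Rlt (frac (x j)) (frac (x i)) /\ index j s < index i s).
  move=> i j ij; have := index_neq (perm_all ps i) ij.
  case: (ltngtP (index i s) (index j s)) => // h _; [left|right]; split => //;
    apply: inc => //; exact: perm_all.
have ne : forall i j, e i j -> i != j.
  by move=> i j eij; apply/eqP => h; move: eij; rewrite h irr.
split.
- move=> i j eij /int_frac hf; case: (key _ _ (ne _ _ eij)) => [[h _]|[h _]]; lra.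
- move=> i j; rewrite /orient_of /ow; case eij: (e i j) => //=.
  case: (key _ _ (ne _ _ eij)) => [[h1 h2]|[h1 h2]].
  + by rewrite h2; case: Rlt_dec => // hn; exfalso; lra.
  + case: Rlt_dec => h; first (exfalso; lra).
    by rewrite ltnNge ltnW.
Qed.

Lemma tte n (e o : rel 'I_n) w : simple_graph e -> perm_eq w (enum 'I_n) ->
  toric_equiv e (ow e w) o -> total_toric_ext e o w.
Proof.
move=> sg pw ht; split => // x [k hk].
have pk : perm_eq (rot k w) (enum 'I_n) by rewrite perm_rot.
have [h1 h2] := chamber_incr sg pk hk; split => //.
apply: teq_trans (teq_eq _ h2) _; apply: teq_trans (teq_sym (ow_rot k sg pw)) ht.
Qed.

Lemma sort_idx n (k : 'I_n -> nat) a b :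
  let w := sort (fun a b => k a <= k b) (enum 'I_n) in
  k a < k b -> index a w < index b w.
Proof.
move=> w kab; have tr : transitive (fun a b : 'I_n => k a <= k b).
  by move=> y x z; apply: leq_trans.
have sw : sorted (fun a b : 'I_n => k a <= k b) w.
  by apply: sort_sorted => x y; exact: leq_total.
have ma : a \in w by rewrite mem_sort mem_enum.
have mb : b \in w by rewrite mem_sort mem_enum.
rewrite ltnNge; apply/negP => hle.
have := sorted_leq_nth tr (fun x => leqnn _) a sw; move/(_ (index b w) (index a w)).
rewrite !inE !index_mem ma mb => /(_ isT isT hle).
rewrite !nth_index // => hk; by move: kab; rewrite ltnNge hk.
Qed.

Lemma sort_ow n (e o : rel 'I_n) (k : 'I_n -> nat) : orientation e o ->
  (forall a b, o a b -> k a < k b) ->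
  o =2 ow e (sort (fun a b => k a <= k b) (enum 'I_n)).
Proof.
move=> [h1 h2] hk a b; rewrite /ow.
case eab: (e a b); last by apply/negP => /h1; rewrite eab.
have := h2 _ _ eab; case oab: (o a b) => /= hba.
  by rewrite sort_idx // hk.
by apply/esym/negbTE; rewrite -leqNgt ltnW // sort_idx // hk.
Qed.

Lemma split_filter (T : eqType) (J : pred T) (w : seq T) :
  sorted (fun a b => J b ==> J a) w -> w = [seq v <- w | J v] ++ [seq v <- w | ~~ J v].
Proof.
have tr : transitive (fun a b => J b ==> J a).
  by move=> y x z; case: (J x); case: (J y); case: (J z).
elim: w => [//|a t IH] st /=.
have st' : sorted (fun a b => J b ==> J a) t by exact: path_sorted st.
case: (boolP (J a)) => ja /=; first by rewrite {1}(IH st').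
have al := order_path_min tr st.
have al2 : all (predC J) t.
  by apply: sub_all al => b /=; rewrite (negPf ja) implybF.
have -> : [seq v <- t | J v] = [::].
  apply/eqP; rewrite -size_eq0 size_filter eqn0Ngt -has_count.
  by apply/hasPn => b /(allP al2).
by rewrite /= (all_filterP al2).
Qed.

Lemma Glem n (e o o' : rel 'I_n) (J : {set 'I_n}) : simple_graph e ->
  acyclic_orientation e o -> toric_equiv e o o' -> order_ideal o' J ->
  exists w, total_toric_ext e o w /\
    w = [seq v <- w | v \in J] ++ [seq v <- w | v \notin J].
Proof.
move=> sg ac h12 id.
have [ori [r hr]] : good e o' by apply/(good_teq sg h12)/good_acyc.
pose M := (\max_u r u).+1.
have rM : forall v, r v < M by move=> v; rewrite ltnS leq_bigmax.
pose k v := r v + (if v \in J then 0 else M).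
have hk : forall a b, o' a b -> k a < k b.
  move=> a b oab; rewrite /k; case: (boolP (b \in J)) => bJ.
  - have aJ : a \in J by apply: (id a b (connect1 oab) bJ).
    by rewrite aJ !addn0 hr.
  - case: (a \in J); rewrite ?addn0.
    + exact: leq_trans (rM a) (leq_addl _ _).
    + by rewrite ltn_add2r hr.
have ow' := sort_ow ori hk.
exists (sort (fun a b => k a <= k b) (enum 'I_n)); split.
- apply: tte => //; first by rewrite perm_sort perm_refl.
  apply: teq_trans (teq_eq _ (fun a b => esym (ow' a b))) (teq_sym h12).
- apply: split_filter; apply: sub_sorted (sort_sorted _ _).
    move=> a b hab; apply/implyP => bJ; apply/negPn/negP => aJ; move: hab.
    rewrite /k bJ (negPf aJ) addn0 => /(leq_trans (leq_addl _ _)).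
    by rewrite leqNgt rM.
  by move=> x y; exact: leq_total.
Qed.

Lemma ideal_compl n (o : rel 'I_n) (I : {set 'I_n}) :
  order_ideal o (~: I) <-> order_filter o I.
Proof.
split => h i j c.
- move=> iI; apply/negPn/negP => jI; have := h i j c; rewrite !inE jI iI => /(_ isT).
  done.
- rewrite !inE => jI; apply/negP => iI; move: jI; rewrite (h i j c iI).
  done.
Qed.

Lemma card_filter n (I : {set 'I_n}) w : perm_eq w (enum 'I_n) ->
  [set v in [seq v <- w | v \in I]] = I /\ #|I| = size [seq v <- w | v \in I].
Proof.
move=> pw; have E : [set v in [seq v <- w | v \in I]] = I.
  by apply/setP => v; rewrite inE mem_filter perm_all // andbT.
split => //; rewrite -{1}E cardsE; apply/card_uniqP.
by rewrite filter_uniq // perm_uniq'.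
Qed.

Local Open Scope R_scope.

Lemma idx_bound n (s : seq 'I_n) v : perm_eq s (enum 'I_n) ->
  (index v s < n)%N.
Proof.
move=> ps; have := perm_size ps; rewrite size_enum_ord => hs.
have : (index v s < size s)%N by rewrite index_mem perm_all.
by rewrite hs.
Qed.

Lemma delta_bound n (m : R) (i : nat) : 0 < m -> (i < n)%N ->
  0 <= m / (INR n + 1) * INR i < m.
Proof.
move=> hm hi; have hn := pos_INR n; have hi' := pos_INR i.
have lt : INR i < INR n + 1 by have := lt_INR _ _ (elimT ltP hi); lra.
have hd : 0 < m / (INR n + 1) by apply: Rdiv_lt_0_compat; lra.
split; first by apply: Rmult_le_pos; lra.
apply: (Rlt_le_trans _ (m / (INR n + 1) * (INR n + 1))).
  by apply: Rmult_lt_compat_l.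
by right; field; lra.
Qed.

Lemma zpt n (e o : rel 'I_n) w k p q (a' b' m : R) : simple_graph e ->
  total_toric_ext e o w -> rot k w = p ++ q ->
  1/8 < a' < 3/8 -> 5/8 < b' < 7/8 -> 0 < m <= 1/8 ->
  let z := fun v => (if v \in p then a' else b') +
                    m / (INR n + 1) * INR (index v (p ++ q)) in
  in_chamber e o z /\
  (forall v, 0 <= m / (INR n + 1) * INR (index v (p ++ q)) < m) /\
  (forall v, frac (z v) = z v).
Proof.
move=> sg [pw tc] hr ha hb hm z.
have ps : perm_eq (p ++ q) (enum 'I_n) by rewrite -hr perm_rot.
have B : forall v, 0 <= m / (INR n + 1) * INR (index v (p ++ q)) < m.
  by move=> v; apply: delta_bound; [lra | exact: idx_bound].
have F : forall v, frac (z v) = z v.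
  move=> v; have := B v; rewrite /z; case: (v \in p) => h; apply: frac_id; lra.
split; last by [].
apply: tc; exists k; rewrite hr => a b ma mb lab; rewrite !F /z.
have hd : 0 < m / (INR n + 1) by apply: Rdiv_lt_0_compat; have := pos_INR n; lra.
have Ba := B a; have Bb := B b.
move: Ba Bb lab; rewrite !index_cat.
case: (boolP (a \in p)) => ap; case: (boolP (b \in p)) => bp Ba Bb.
- move=> lab; apply: Rplus_lt_compat_l; apply: Rmult_lt_compat_l => //.
  by apply: lt_INR; apply/ltP.
- move=> _; lra.
- move=> lab; exfalso; move: lab; rewrite -index_mem in bp.
  by rewrite ltnNge (leq_trans (ltnW bp) (leq_addr _ _)).
- move=> lab; apply: Rplus_lt_compat_l; apply: Rmult_lt_compat_l => //.
  apply: lt_INR; apply/ltP; move: lab; rewrite ltn_add2l.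
  done.
Qed.

Local Close Scope R_scope.

Lemma ideal_conn n (o : rel 'I_n) (I : {set 'I_n}) :
  (forall u v, o u v -> v \in I -> u \in I) -> order_ideal o I.
Proof.
move=> h i j /connectP [pth pp ->]; elim: pth i pp => [|x pth IH] i //=.
by move/andP => [oix pp] hl; apply: h oix (IH _ pp hl).
Qed.

Lemma filter_conn n (o : rel 'I_n) (I : {set 'I_n}) :
  (forall u v, o u v -> u \in I -> v \in I) -> order_filter o I.
Proof.
move=> h i j /connectP [pth pp ->]; elim: pth i pp => [|x pth IH] i //=.
by move/andP => [oix pp] hi; apply: IH pp (h _ _ oix hi).
Qed.

Local Open Scope R_scope.

Lemma iv_ii n (e o : rel 'I_n) w k p q : simple_graph e ->
  total_toric_ext e o w -> rot k w = p ++ q ->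
  exists o', toric_equiv e o o' /\ order_ideal o' [set v in p].
Proof.
move=> sg tt hr.
have := @zpt n e o w k p q (1/4) (3/4) (1/8) sg tt hr.
move=> /(_ ltac:(lra) ltac:(lra) ltac:(lra)) [[_ hc] [B F]].
eexists; split; first exact: teq_sym hc.
apply: ideal_conn => u v; rewrite /orient_of !inE !F.
case: Rlt_dec => lt; rewrite ?andbF ?andbT // => _ vp.
apply/negPn/negP => up; move: lt; rewrite vp (negPf up).
have := B u; have := B v; move=> bv bu hlt; lra.
Qed.

Lemma abs_help (a D m eps : R) : 0 <= D < m -> m <= eps ->
  Rabs (a + IZR 0 - (a + D)) < eps.
Proof. move=> h1 h2; apply: Rabs_def1; lra. Qed.

Lemma iv_i n (e o : rel 'I_n) (I : {set 'I_n}) w : simple_graph e ->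
  total_toric_ext e o w -> cyc_consecutive I w -> toric_filter e o I.
Proof.
move=> sg tt [k hI].
case: (eqVneq I set0) => [->|I0]; first by left.
case: (eqVneq I setT) => [->|IT]; first by right; left.
right; right; split => //.
exists (fun _ => 0%Z), (1/4), (3/4), (1/8); split; first lra.
move=> a' b' /Rabs_def2 [ha1 ha2] /Rabs_def2 [hb1 hb2] eps heps.
have hr : rot k w = take #|I| (rot k w) ++ drop #|I| (rot k w) by rewrite cat_take_drop.
have hm : 0 < Rmin eps (1/8) <= 1/8.
  split; [apply: Rmin_glb_lt; lra | exact: Rmin_r].
have := @zpt n e o w k _ _ a' b' (Rmin eps (1/8)) sg tt hr.
have h1 : 1/8 < a' < 3/8 by lra.
have h2 : 5/8 < b' < 7/8 by lra.
move=> /(_ h1 h2 hm) [hc [B F]].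
eexists; split; first exact: hc.
move=> v /=; have := B v; have := Rmin_l eps (1/8).
have -> : (v \in I) = (v \in take #|I| (rot k w)) by rewrite -{1}hI inE.
by move=> g1 g2; case: (v \in _); apply: abs_help g2 g1.
Qed.

Lemma i_ii_iii n (e o : rel 'I_n) (I : {set 'I_n}) : toric_filter e o I ->
  (exists o', toric_equiv e o o' /\ order_ideal o' I) \/
  (exists o', toric_equiv e o o' /\ order_filter o' I).
Proof.
case=> [->|[->|[I0 IT [k [a [b [eps [heps H]]]]]]]].
- left; exists o; split; [exact: rst_refl | by move=> i j _; rewrite inE].
- left; exists o; split; [exact: rst_refl | by move=> i j _; rewrite inE].
have [fa1 fa2] := frac_bounds a; have [fb1 fb2] := frac_bounds b.
pose d := Rmin eps (Rmin (1 - frac a) (1 - frac b)).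
have hd : 0 < d by apply: Rmin_glb_lt => //; apply: Rmin_glb_lt; lra.
have d1 : d <= eps := Rmin_l _ _.
have d2 : d <= 1 - frac a by apply: Rle_trans (Rmin_r _ _) (Rmin_l _ _).
have d3 : d <= 1 - frac b by apply: Rle_trans (Rmin_r _ _) (Rmin_r _ _).
have [a' [b' [ha [hb [al [be ne]]]]]] : exists a' b', Rabs (a' - a) < eps /\
    Rabs (b' - b) < eps /\ 0 < frac a' < 1 /\ 0 < frac b' < 1 /\ frac a' <> frac b'.
  exists (a + d/2).
  have fa' : frac (a + d/2) = frac a + d/2 by apply: frac_shift; lra.
  case: (Req_dec (frac a) (frac b)) => hab.
  + exists (b + d/4).
    have fb' : frac (b + d/4) = frac b + d/4 by apply: frac_shift; lra.
    rewrite fa' fb'; split; first by apply: Rabs_def1; lra.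
    split; first by apply: Rabs_def1; lra.
    split; first lra. split; first lra. move=> h; lra.
  + exists (b + d/2).
    have fb' : frac (b + d/2) = frac b + d/2 by apply: frac_shift; lra.
    rewrite fa' fb'; split; first by apply: Rabs_def1; lra.
    split; first by apply: Rabs_def1; lra.
    split; first lra. split; first lra. move=> h; apply: hab; lra.
set al' := frac a' in al ne; set be' := frac b' in be ne.
pose g := Rmin (Rabs (al' - be') / 2) (Rmin (Rmin al' (1 - al')) (Rmin be' (1 - be'))).
have hab : 0 < Rabs (al' - be') by apply: Rabs_pos_lt => h; apply: ne; lra.
have hg : 0 < g.
  apply: Rmin_glb_lt; first lra.
  by apply: Rmin_glb_lt; apply: Rmin_glb_lt; lra.
have g1 : g <= Rabs (al' - be') / 2 := Rmin_l _ _.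
have g2 : g <= al'.
  by apply: Rle_trans (Rmin_r _ _) _; apply: Rle_trans (Rmin_l _ _) (Rmin_l _ _).
have g3 : g <= 1 - al'.
  by apply: Rle_trans (Rmin_r _ _) _; apply: Rle_trans (Rmin_l _ _) (Rmin_r _ _).
have g4 : g <= be'.
  by apply: Rle_trans (Rmin_r _ _) _; apply: Rle_trans (Rmin_r _ _) (Rmin_l _ _).
have g5 : g <= 1 - be'.
  by apply: Rle_trans (Rmin_r _ _) _; apply: Rle_trans (Rmin_r _ _) (Rmin_r _ _).
have [z [zc zn]] := H a' b' ha hb g hg.
have Fz : forall v, Rabs (frac (z v) - (if v \in I then al' else be')) < g.
  move=> v; apply: (@frac_near ((if v \in I then a' else b') + IZR (k v))).
  - by rewrite frac_periodic; case: (v \in I).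
  - exact: zn v.
  - by case: (v \in I).
  - by case: (v \in I).
have teq : toric_equiv e o (orient_of e z) := teq_sym zc.2.
case: (Rlt_le_dec al' be') => cmp.
- have RA : Rabs (al' - be') = be' - al' by rewrite Rabs_left; lra.
  left; exists (orient_of e z); split => //; apply: ideal_conn => u v.
  rewrite /orient_of; case: Rlt_dec => lt; rewrite ?andbF ?andbT // => _ vI.
  apply/negPn/negP => uI; have := Fz u; have := Fz v; rewrite vI (negPf uI).
  move=> /Rabs_def2 [? ?] /Rabs_def2 [? ?]; lra.
- have RA : Rabs (al' - be') = al' - be' by rewrite Rabs_right; lra.
  right; exists (orient_of e z); split => //; apply: filter_conn => u v.
  rewrite /orient_of; case: Rlt_dec => lt; rewrite ?andbF ?andbT // => _ uI.
  apply/negPn/negP => vI; have := Fz u; have := Fz v; rewrite uI (negPf vI).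
  move=> /Rabs_def2 [? ?] /Rabs_def2 [? ?]; lra.
Qed.

Local Close Scope R_scope.

Theorem mainTheorem12 (n : nat) (e o : rel 'I_n) (I : {set 'I_n}) :
  simple_graph e -> acyclic_orientation e o ->
  [/\ (toric_filter e o I <-> exists o', toric_equiv e o o' /\ order_ideal o' I),
      (toric_filter e o I <-> exists o'', toric_equiv e o o'' /\ order_filter o'' I) &
      (toric_filter e o I <-> exists w, total_toric_ext e o w /\ cyc_consecutive I w)].
Proof.
move=> sg ac.
have G1 : forall J, (exists o', toric_equiv e o o' /\ order_ideal o' J) ->
    exists w, total_toric_ext e o w /\
      w = [seq v <- w | v \in J] ++ [seq v <- w | v \notin J].
  by move=> J [o' [h1 h2]]; exact: Glem sg ac h1 h2.
have ii_iv : (exists o', toric_equiv e o o' /\ order_ideal o' I) ->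
    exists w, total_toric_ext e o w /\ cyc_consecutive I w.
  move=> h; have [w [tt hw]] := G1 I h; exists w; split => //; exists 0.
  rewrite rot0; have [E C] := card_filter I tt.1.
  move: E C hw; set f1 := [seq v <- w | v \in I];
    set f2 := [seq v <- w | v \notin I] => E C hw.
  by rewrite C hw take_size_cat.
have iii_iv : (exists o'', toric_equiv e o o'' /\ order_filter o'' I) ->
    exists w, total_toric_ext e o w /\ cyc_consecutive I w.
  move=> [o'' [h1 h2]].
  have [w [tt hw]] := G1 (~: I) (ex_intro _ o'' (conj h1 ((ideal_compl o'' I).2 h2))).
  exists w; split => //; exists (size [seq v <- w | v \in ~: I]).
  have fe : [seq v <- w | v \notin ~: I] = [seq v <- w | v \in I].
    by apply: eq_filter => v; rewrite inE negbK.
  rewrite fe in hw; have [E C] := card_filter I tt.1.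
  move: E C hw; set f1 := [seq v <- w | v \in ~: I];
    set f2 := [seq v <- w | v \in I] => E C hw.
  by rewrite hw rot_size_cat C take_size_cat.
have iv_ii' : (exists w, total_toric_ext e o w /\ cyc_consecutive I w) ->
    exists o', toric_equiv e o o' /\ order_ideal o' I.
  move=> [w [tt [k hI]]].
  have hr : rot k w = take #|I| (rot k w) ++ drop #|I| (rot k w) by rewrite cat_take_drop.
  have [o' [h1 h2]] := iv_ii sg tt hr; exists o'; split => //.
  by rewrite -hI.
have iv_iii' : (exists w, total_toric_ext e o w /\ cyc_consecutive I w) ->
    exists o'', toric_equiv e o o'' /\ order_filter o'' I.
  move=> h; have [w [tt hw]] := G1 I (iv_ii' h).
  have [E C] := card_filter (~: I) tt.1.
  have fe : [seq v <- w | v \notin I] = [seq v <- w | v \in ~: I].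
    by apply: eq_filter => v; rewrite inE.
  rewrite fe in hw.
  move: E C hw; set f1 := [seq v <- w | v \in I];
    set f2 := [seq v <- w | v \in ~: I] => E C hw.
  have hr : rot (size f1) w = f2 ++ f1 by rewrite hw rot_size_cat.
  have [o' [h1 h2]] := iv_ii sg tt hr; exists o'; split => //.
  by apply/ideal_compl; rewrite -E.
have iv_i' : (exists w, total_toric_ext e o w /\ cyc_consecutive I w) ->
    toric_filter e o I.
  by move=> [w [tt cc]]; exact: iv_i sg tt cc.
split; split.
- by case/i_ii_iii => // /iii_iv /iv_ii'.
- by move/ii_iv.
- by case/i_ii_iii => // /ii_iv /iv_iii'.
- by move/iii_iv.
- by case/i_ii_iii => [/ii_iv|/iii_iv].
- exact: iv_i'.
Qed.
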